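(* Let $p$ be a prime. (1) For natural numbers $m,n$: there exist integers $r,s\ge1$ and $\ell\in\mathbb{Z}$ with $m=p^r$, $n=p^s$ and $n-m=p^\ell(m-1)$ if and only if $m=p^r$ for some $r\geq1$ and $n=m^2$. (2) For integers $m,n$: there exist integers $r,s\geq1$, $\ell\in\mathbb{Z}$ and signs $\rho,\sigma,\lambda\in\{-1,1\}$ with $m=\rho p^r$, $n=\sigma p^s$ and $n-m=\lambda p^\ell(m-1)$ if and only if $m,n\in\{\pm p^h: h\geq1\}$ and either $n=m^2$, or $p=2$ and $(m,n)\in\{(-2,-8),(2,-2),(4,-2),(4,-8)\}$, or $p=3$ and $(m,n)=(3,-3)$. Equivalently, writing $\bar\theta(m,n)$ for the formula $P_0(m)\wedge P_0(n)\wedge R(m-1,n-m)$: in $\mathfrak{N}_p$ (with $P_0(n)$ being $R(1,n)\wedge n\geq 2$) it defines $\{(p^h,p^{2h}):h\geq1\}$, and in $\mathfrak{D}_p$ (with $P_0(n)$ being $R(1,n)\wedge T(n)$) it defines the set described in (2).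
   Context: For a prime $p$, $x\mid_p y$ (on $\mathbb{Z}$ or $\mathbb{N}$) means $y=\pm xp^s$ for some $s\in\mathbb{Z}$. $\mathfrak{N}_p=(\mathbb{N};0,1,+,\mid_p)$ with $R$ interpreted as $\mid_p$; $\mathfrak{D}_p=(\mathbb{Z};0,1,+,\mid,\mid_p,\mathbb{Z}\smallsetminus\{-1,0,1\})$ with $R$ interpreted as $\mid_p$ and $T$ as $\mathbb{Z}\smallsetminus\{-1,0,1\}$. The expressions $m-1$, $n-m$ are read as integer subtraction. *)

(* Defs.v *)
From mathcomp Require Import all_boot all_order all_algebra.
Set Implicit Arguments. Unset Strict Implicit. Unset Printing Implicit Defensive.
Import Order.TTheory GRing.Theory Num.Theory.

(* Main.v *)
Require Import Defs.
From mathcomp Require Import all_boot all_order all_algebra.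
Import Order.TTheory GRing.Theory Num.Theory.
From mathcomp Require Import zify ring.
Local Open Scope ring_scope.

Lemma PoszX (n k : nat) : Posz (n ^ k)%N = (Posz n) ^+ k.
Proof. by rewrite -!natz natrX. Qed.

Lemma ufz (p a b : nat) (x y : int) : prime p -> ~~ (p%:Z %| x)%Z -> ~~ (p%:Z %| y)%Z ->
  p%:Z ^+ a * x = p%:Z ^+ b * y -> a = b /\ x = y.
Proof.
move=> hp; wlog hab: a b x y / (a <= b)%N.
  move=> W hx hy E; case: (leqP a b) => h; first exact: W.
  by have [-> ->] := W b a y x (ltnW h) hy hx (esym E).
move=> hx hy E.
have p0 : p%:Z ^+ a != 0 by rewrite expf_neq0 // -lt0n prime_gt0.
move: E; rewrite -(subnKC hab) exprD -mulrA => /(mulfI p0) E.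
case E2: (b - a)%N => [|c].
  by rewrite E2 expr0 mul1r in E; split => //; lia.
exfalso; move/negP: hx; apply; rewrite E E2 exprS -mulrA.
by apply: dvdz_mulr; apply: dvdzz.
Qed.

Lemma ndvd1 p : prime p -> ~~ (p%:Z %| 1)%Z.
Proof. move=> hp; rewrite dvdz1 /=. by case: p hp => [|[|]]. Qed.

Lemma ndvd_sign p (rho : int) : prime p -> (rho = 1 \/ rho = -1) -> ~~ (p%:Z %| rho)%Z.
Proof. by move=> hp [->|->]; rewrite ?rpredN ndvd1. Qed.

Lemma ndvd_msign p (rho x : int) : (rho = 1 \/ rho = -1) -> ~~ (p%:Z %| x)%Z -> ~~ (p%:Z %| rho * x)%Z.
Proof. by move=> [->|->]; rewrite ?mul1r ?mulN1r ?rpredN. Qed.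

Lemma dvd_pow p (k : nat) : (0 < k)%N -> (p%:Z %| p%:Z ^+ k)%Z.
Proof. by move=> hk; apply: dvdz_exp => //; apply: dvdzz. Qed.

Lemma ndvd_add p (a u : int) : (p%:Z %| a)%Z -> ~~ (p%:Z %| u)%Z -> ~~ (p%:Z %| a + u)%Z.
Proof. by move=> ha; rewrite rpredDl. Qed.

Lemma rat_int p (A B l : int) : prime p -> ~~ (p%:Z %| B)%Z ->
  (A%:~R : rat) = (p%:R : rat) ^ l * B%:~R -> exists k : nat, l = k /\ A = p%:Z ^+ k * B.
Proof.
move=> hp hB; case: l => k E.
  exists k; split => //; apply: (@intr_inj rat).
  by rewrite E rmorphM /= rmorphXn.
exfalso; move/negP: hB; apply.
have pn0 : (p%:R : rat) ^+ k.+1 != 0 by rewrite expf_neq0 // pnatr_eq0 -lt0n prime_gt0.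
have : (B%:~R : rat) = (A * p%:Z ^+ k.+1)%:~R.
  rewrite rmorphM /= rmorphXn /= E.
  have -> : (p%:R : rat) ^ (Negz k) = (p%:R ^+ k.+1)^-1 by [].
  by rewrite mulrC mulrA mulfV // mul1r.
move/intr_inj => ->; apply: dvdz_mull; exact: dvd_pow.
Qed.

Lemma pge p a : prime p -> (0 < a)%N -> (2 <= p ^ a)%N.
Proof.
move=> hp ha; apply: leq_trans (prime_gt1 hp) _.
by have := leq_pexp2l (prime_gt0 hp) ha; rewrite expn1.
Qed.

Lemma pow_eq_prime p q a : prime p -> prime q -> (p ^ a = q)%N -> p = q /\ a = 1%N.
Proof.
move=> hp hq E; case: a E => [|a] E.
  by rewrite expn0 in E; rewrite -E in hq.
have hd : (p %| q)%N by rewrite -E dvdn_exp.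
have pq : p = q by apply/(@prime_nt_dvdP p q hq) => //; rewrite neq_ltn prime_gt1 ?orbT.
subst q; split => //; apply/eqP; rewrite -(eqn_exp2l _ _ (prime_gt1 hp)) expn1; exact/eqP.
Qed.

Lemma pow_add2 p a b : prime p -> (0 < a)%N -> (p ^ a + 2 = p ^ b)%N -> [/\ p = 2%N, a = 1%N & b = 2%N].
Proof.
move=> hp ha E.
have hab : (a < b)%N by rewrite -(ltn_exp2l _ _ (prime_gt1 hp)); lia.
have h : (p ^ a %| p ^ a + 2)%N by rewrite E dvdn_exp2l // ltnW.
rewrite dvdn_addr // in h.
have h2 := dvdn_leq (isT : (0 < 2)%N) h.
have h3 := leq_pexp2l (prime_gt0 hp) ha; rewrite expn1 in h3.
have h4 := prime_gt1 hp.
have pa2 : (p ^ a = 2)%N by lia.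
have [p2 a1] := pow_eq_prime p 2 a hp isT pa2.
subst p a; split => //; apply/eqP; rewrite -(eqn_exp2l _ _ (isT : (1 < 2)%N)) -E //.
Qed.

Definition concl (p r s : nat) (rho sig : int) :=
  (sig = 1 /\ s = (r + r)%N) \/
  (p = 2%N /\ ((rho = -1 /\ r = 1%N /\ sig = -1 /\ s = 3%N) \/
               (rho = 1 /\ r = 1%N /\ sig = -1 /\ s = 1%N) \/
               (rho = 1 /\ r = 2%N /\ sig = -1 /\ s = 1%N) \/
               (rho = 1 /\ r = 2%N /\ sig = -1 /\ s = 3%N))) \/
  (p = 3%N /\ rho = 1 /\ r = 1%N /\ sig = -1 /\ s = 1%N).

Lemma core (p r s k : nat) (rho sig lam : int) : prime p -> (1 <= r)%N -> (1 <= s)%N ->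
  (rho = 1 \/ rho = -1) -> (sig = 1 \/ sig = -1) -> (lam = 1 \/ lam = -1) ->
  sig * p%:Z ^+ s - rho * p%:Z ^+ r = lam * p%:Z ^+ k * (rho * p%:Z ^+ r - 1) ->
  concl p r s rho sig.
Proof.
move=> hp hr hs hrho hsig hlam E.
set P := p%:Z.
set B := lam * (rho * P ^+ r - 1).
have hBnd : ~~ (P %| B)%Z.
  apply: ndvd_msign => //; apply: ndvd_add; first by apply: dvdz_mull; exact: dvd_pow.
  by rewrite rpredN ndvd1.
have E' : sig * P ^+ s - rho * P ^+ r = P ^+ k * B by rewrite E /B; ring.
have Yr := pge p r hp hr.
have Ys := pge p s hp hs.
case: (ltngtP r s) => hrs.
-
  have hd : (0 < s - r)%N by lia.
  have Xd := pge p (s - r) hp hd.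
  have E2 : P ^+ r * (sig * P ^+ (s - r) - rho) = P ^+ k * B.
    by rewrite -E' -{2}(subnKC (ltnW hrs)) exprD; ring.
  have nd : ~~ (P %| sig * P ^+ (s - r) - rho)%Z.
    by apply: ndvd_add; [apply: dvdz_mull; exact: dvd_pow | rewrite rpredN; exact: ndvd_sign].
  have [rk E3] := ufz p r k _ _ hp nd hBnd E2.
  move: E3; rewrite /B /P -!PoszX => E3; clear -E3 Yr Xd hrho hsig hlam hp hd hrs hr.
  case: hrho => ?; case: hsig => ?; case: hlam => ?; subst rho sig lam; try (exfalso; lia).
  + left; split => //; have : (p ^ (s - r) = p ^ r)%N by lia.
    move/eqP; rewrite eqn_exp2l ?prime_gt1 // => /eqP; lia.
  + have [p2 d1 r2] := pow_add2 p (s - r) r hp hd ltac:(lia).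
    by right; left; split => //; do 3 right; lia.
  + left; split => //; have : (p ^ (s - r) = p ^ r)%N by lia.
    move/eqP; rewrite eqn_exp2l ?prime_gt1 // => /eqP; lia.
  + have [p2 r1 d2] := pow_add2 p r (s - r) hp hr ltac:(lia).
    by right; left; split => //; left; lia.
-
  have hd : (0 < r - s)%N by lia.
  have Xd := pge p (r - s) hp hd.
  have Er : P ^+ r = P ^+ s * P ^+ (r - s) by rewrite -exprD subnKC // ltnW.
  have E2 : P ^+ s * (sig - rho * P ^+ (r - s)) = P ^+ k * B.
    by rewrite -E' Er; ring.
  have nd : ~~ (P %| sig - rho * P ^+ (r - s))%Z.
    by rewrite addrC; apply: ndvd_add; [rewrite rpredN; apply: dvdz_mull; exact: dvd_pow | exact: ndvd_sign].
  have [sk E3] := ufz p s k _ _ hp nd hBnd E2.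
  move: E3; rewrite /B Er /P -!PoszX -PoszM => E3; clear -E3 Ys Xd hrho hsig hlam hp hd hrs hs.
  have q1 : (2 * p ^ (r - s) <= p ^ s * p ^ (r - s))%N by apply: leq_mul.
  have q2 : (2 * p ^ s <= p ^ s * p ^ (r - s))%N by rewrite [X in (_ <= X)%N]mulnC; apply: leq_mul.
  move: (p ^ s * p ^ (r - s))%N q1 q2 E3 => Q q1 q2 E3.
  case: hrho => ?; case: hsig => ?; case: hlam => ?; subst rho sig lam; try (exfalso; lia).
  have [h1 h2] : (p ^ (r - s) = 2 /\ p ^ s = 2)%N by lia.
  have [p2 d1] := pow_eq_prime p 2 _ hp isT h1.
  have [_ s1] := pow_eq_prime p 2 _ hp isT h2.
  by right; left; split => //; right; right; left; lia.
-
  subst s.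
  have hk : P ^+ k != 0 by rewrite expf_neq0 // /P -lt0n prime_gt0.
  have hB0 : B != 0 by apply: contraNneq hBnd => ->; exact: dvdz0.
  have nz : P ^+ k * B != 0 by rewrite mulf_neq0.
  have hz : sig * P ^+ r - rho * P ^+ r != 0 by rewrite E'.
  case: hrho => ?; case: hsig => ?; subst rho sig; move: E' => E2.
  + by rewrite subrr eqxx in hz.
  + case: (eqVneq p 2%N) => [p2|p2].
    * have [_ E3] := ufz p r.+1 k (-1) B hp ltac:(by rewrite rpredN ndvd1) hBnd ltac:(rewrite -E2 exprS /P p2; ring).
      move: E3; rewrite /B /P -!PoszX => E3; clear -E3 Yr hlam hp hr p2.
      case: hlam => ? ; subst lam; try (exfalso; lia).
      have [_ r1] := pow_eq_prime p 2 r hp isT ltac:(lia).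
      by right; left; split => //; right; left; lia.
    * have n2 : ~~ (P %| 2)%Z.
        rewrite dvdzE /=; apply/negP => h.
        have := (@prime_nt_dvdP p 2 isT); rewrite neq_ltn prime_gt1 ?orbT // => /(_ isT) /(_ h).
        by move/eqP: p2.
      have [_ E3] := ufz p r k (-2) B hp ltac:(by rewrite rpredN) hBnd ltac:(rewrite -E2 /P; ring).
      move: E3; rewrite /B /P -!PoszX => E3; clear -E3 Yr hlam hp hr.
      case: hlam => ? ; subst lam; try (exfalso; lia).
      have [p3 r1] := pow_eq_prime p 3 r hp isT ltac:(lia).
      by right; right; lia.
  + case: (eqVneq p 2%N) => [p2|p2].
    * have [_ E3] := ufz p r.+1 k 1 B hp ltac:(by rewrite ndvd1) hBnd ltac:(rewrite -E2 exprS /P p2; ring).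
      move: E3; rewrite /B /P -!PoszX => E3; clear -E3 Yr hlam.
      by case: hlam => ? ; subst lam; exfalso; lia.
    * have n2 : ~~ (P %| 2)%Z.
        rewrite dvdzE /=; apply/negP => h.
        have := (@prime_nt_dvdP p 2 isT); rewrite neq_ltn prime_gt1 ?orbT // => /(_ isT) /(_ h).
        by move/eqP: p2.
      have [_ E3] := ufz p r k 2 B hp n2 hBnd ltac:(rewrite -E2 /P; ring).
      move: E3; rewrite /B /P -!PoszX => E3; clear -E3 Yr hlam.
      by case: hlam => ? ; subst lam; exfalso; lia.
  + by rewrite subrr eqxx in hz.
Qed.

Lemma to_rat (p k : nat) (A lam B : int) : A = lam * p%:Z ^+ k * B ->
  (A%:~R : rat) = lam%:~R * (p%:R : rat) ^ (k%:Z) * B%:~R.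
Proof. by move=> ->; rewrite !rmorphM /= rmorphXn. Qed.

Lemma to_rat1 (p k : nat) (A B : int) : A = p%:Z ^+ k * B ->
  (A%:~R : rat) = (p%:R : rat) ^ (k%:Z) * B%:~R.
Proof. by move=> ->; rewrite !rmorphM /= rmorphXn. Qed.

Theorem lemma4p4 (p : nat) (hp : prime p) :
  (forall m n : nat,
      (exists (r s : nat) (l : int),
          (1 <= r)%N /\ (1 <= s)%N /\ m = (p ^ r)%N /\ n = (p ^ s)%N /\
          ((n%:Z - m%:Z)%:~R : rat) = (p%:R : rat) ^ l * ((m%:Z - 1)%:~R))
      <->
      ((exists r : nat, (1 <= r)%N /\ m = (p ^ r)%N) /\ n = (m ^ 2)%N))
  /\
  (forall m n : int,
      (exists (r s : nat) (l : int) (rho sigma lambda : int),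
          (1 <= r)%N /\ (1 <= s)%N /\
          (rho = 1 \/ rho = -1) /\ (sigma = 1 \/ sigma = -1) /\
          (lambda = 1 \/ lambda = -1) /\
          m = rho * (p%:Z) ^+ r /\ n = sigma * (p%:Z) ^+ s /\
          ((n - m)%:~R : rat) = lambda%:~R * (p%:R : rat) ^ l * ((m - 1)%:~R))
      <->
      ((exists h : nat, (1 <= h)%N /\ (m = (p%:Z) ^+ h \/ m = - (p%:Z) ^+ h)) /\
       (exists h : nat, (1 <= h)%N /\ (n = (p%:Z) ^+ h \/ n = - (p%:Z) ^+ h)) /\
       (n = m ^+ 2 \/
        (p = 2%N /\ ((m = -2 /\ n = -8) \/ (m = 2 /\ n = -2) \/
                     (m = 4 /\ n = -2) \/ (m = 4 /\ n = -8))) \/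
        (p = 3%N /\ m = 3 /\ n = -3)))).
Proof.
split.
- move=> m n; split.
  + move=> [r [s [l [hr [hs [hm [hn E]]]]]]].
    have nd : ~~ (p%:Z %| m%:Z - 1)%Z.
      by rewrite hm PoszX; apply: ndvd_add; [exact: dvd_pow | rewrite rpredN ndvd1].
    have [k [_ E2]] := rat_int p _ _ l hp nd E.
    have E3 : 1 * p%:Z ^+ s - 1 * p%:Z ^+ r = 1 * p%:Z ^+ k * (1 * p%:Z ^+ r - 1).
      by rewrite hm hn !PoszX in E2; rewrite !mul1r E2.
    have := core p r s k 1 1 1 hp hr hs (or_introl erefl) (or_introl erefl) (or_introl erefl) E3.
    move=> [[_ hs2]|H]; last by exfalso; clear -H; lia.
    split; first by exists r.
    by rewrite hn hm hs2 -expnM muln2 addnn.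
  + move=> [[r [hr hm]] hn].
    exists r, (r + r)%N, (Posz r); do 2 (split; first by lia).
    have hn' : n = (p ^ (r + r))%N by rewrite hn hm -expnM muln2 addnn.
    split; first by []; split; first by [].
    apply: to_rat1; rewrite hn' hm !PoszX exprD; ring.
- move=> m n; split.
  + move=> [r [s [l [rho [sig [lam [hr [hs [hrho [hsig [hlam [hm [hn E]]]]]]]]]]]]].
    rewrite -mulrA mulrCA -rmorphM /= in E.
    have nd : ~~ (p%:Z %| lam * (m - 1))%Z.
      apply: ndvd_msign => //; rewrite hm; apply: ndvd_add; last by rewrite rpredN ndvd1.
      by apply: dvdz_mull; exact: dvd_pow.
    have [k [_ E2]] := rat_int p _ _ l hp nd E.
    have E3 : sig * p%:Z ^+ s - rho * p%:Z ^+ r = lam * p%:Z ^+ k * (rho * p%:Z ^+ r - 1).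
      by rewrite hm hn in E2; rewrite E2; ring.
    have C := core p r s k rho sig lam hp hr hs hrho hsig hlam E3.
    split.
      by exists r; split => //; case: hrho hm => -> ->; [left|right]; ring.
    split.
      by exists s; split => //; case: hsig hn => -> ->; [left|right]; ring.
    case: C => [[hs1 hs2]|[[p2 H]|[p3 [h1 [h2 [h3 h4]]]]]].
    * left; rewrite hn hm hs1 hs2 exprD; case: hrho => ->; ring.
    * subst p; right; left; split => //.
      case: H => [[h1 [h2 [h3 h4]]]|[[h1 [h2 [h3 h4]]]|[[h1 [h2 [h3 h4]]]|[h1 [h2 [h3 h4]]]]]];
        subst rho r sig s; rewrite hm hn.
      -- by left.
      -- by right; left.
      -- by right; right; left.
      -- by right; right; right.
    * subst p rho r sig s; right; right; rewrite hm hn; by [].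
  + move=> [[h1 [hh1 hm]] [[h2 [hh2 hn]] H]].
    case: H => [hn2|[[p2 H]|[p3 [hm3 hn3]]]].
    * case: hm => hm.
      -- exists h1, (h1 + h1)%N, (Posz h1), 1, 1, 1.
         do 2 (split; first by lia). do 3 (split; first by left).
         split; first by rewrite hm mul1r.
         split; first by rewrite hn2 hm mul1r -exprM muln2 addnn.
         apply: to_rat; rewrite hn2 hm; ring.
      -- exists h1, (h1 + h1)%N, (Posz h1), (-1), 1, (-1).
         do 2 (split; first by lia). split; first by right. split; first by left.
         split; first by right.
         split; first by rewrite hm mulN1r.
         split; first by rewrite hn2 hm sqrrN mul1r -exprM muln2 addnn.
         apply: to_rat; rewrite hn2 hm; ring.
    * subst p.
      case: H => [[-> ->]|[[-> ->]|[[-> ->]|[-> ->]]]].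
      -- exists 1%N, 3%N, (Posz 1), (-1), (-1), 1.
         do 2 (split; first by []). split; first by right. split; first by right.
         split; first by left. split; first by []. split; first by [].
         by apply: to_rat.
      -- exists 1%N, 1%N, (Posz 2), 1, (-1), (-1).
         do 2 (split; first by []). split; first by left. split; first by right.
         split; first by right. split; first by []. split; first by [].
         by apply: to_rat.
      -- exists 2%N, 1%N, (Posz 1), 1, (-1), (-1).
         do 2 (split; first by []). split; first by left. split; first by right.
         split; first by right. split; first by []. split; first by [].
         by apply: to_rat.
      -- exists 2%N, 3%N, (Posz 2), 1, (-1), (-1).
         do 2 (split; first by []). split; first by left. split; first by right.
         split; first by right. split; first by []. split; first by [].
         by apply: to_rat.
    * subst p m n.
      exists 1%N, 1%N, (Posz 1), 1, (-1), (-1).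
      do 2 (split; first by []). split; first by left. split; first by right.
      split; first by right. split; first by []. split; first by [].
      by apply: to_rat.
Qed.
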